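(* Let $G$ be a finite group with irreducible complex characters $\psi_1,\dots,\psi_k$ of dimensions $n_i=\psi_i(1)$. Consider the problem of minimizing, over $(\alpha_1,\dots,\alpha_k)\in\mathbb{R}^k$, the quantity $$\Big\|\sum_{i=1}^k\frac{\alpha_i}{n_i^2}\mathrm{Re}(\psi_i)\Big\|_1$$ subject to the constraints $\sum_{i=1}^k\alpha_in_i=|G|$, $\alpha_i\ge0$ for $i=1,\dots,k$, and $\sum_{i=1}^k\alpha_i\mathrm{Re}(\psi_i(g))\ge0$ for all $g\in G$. Then $(\alpha_1,\dots,\alpha_k)=(n_1,\dots,n_k)$, i.e. the regular character $n_1\psi_1+\cdots+n_k\psi_k$, is a solution of this constrained minimization problem.
   Context: For a complex-valued function $f$ on $G$, its $L_1$ norm is $\|f\|_1=\sum_{g\in G}|\mathrm{Re}(f(g))|$. *)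

(* Defs.v *)
From HB Require Import structures.
From mathcomp Require Import all_boot all_order all_algebra all_fingroup all_solvable all_field all_character.
Unset Printing Implicit Defensive.
Import Order.TTheory GRing.Theory Num.Theory.
Local Open Scope ring_scope.

Definition L1norm {gT : finGroupType} (G : {group gT}) (f : gT -> algC) : algC :=
  \sum_(g in G) `|'Re (f g)|.

Definition cdim {gT : finGroupType} (G : {group gT}) (i : Iirr G) : algC :=
  'chi[G]_i 1%g.

Definition weighted_fun {gT : finGroupType} (G : {group gT})
    (alpha : Iirr G -> algC) (g : gT) : algC :=
  \sum_(i : Iirr G) alpha i / (cdim G i) ^+ 2 * 'Re ('chi[G]_i g).

Definition objective {gT : finGroupType} (G : {group gT})
    (alpha : Iirr G -> algC) : algC :=
  L1norm G (weighted_fun G alpha).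

(* feasibility: alpha real nonnegative (alpha_i >= 0 in algC forces real),
   sum alpha_i n_i = |G|, and sum alpha_i Re(psi_i(g)) >= 0 for all g in G *)
Definition feasible {gT : finGroupType} (G : {group gT})
    (alpha : Iirr G -> algC) : Prop :=
  [/\ \sum_(i : Iirr G) alpha i * cdim G i = #|G|%:R,
      forall i, 0 <= alpha i &
      forall g, g \in G -> 0 <= \sum_(i : Iirr G) alpha i * 'Re ('chi[G]_i g)].

(* Main.v *)
Require Import Defs.
From HB Require Import structures.
From mathcomp Require Import all_boot all_order all_algebra all_fingroup all_solvable all_field all_character.
Import Order.TTheory GRing.Theory Num.Theory.
Local Open Scope ring_scope.

Lemma sum_chi (gT : finGroupType) (G : {group gT}) (i : Iirr G) :
  \sum_(g in G) 'chi[G]_i g = #|G|%:R * (i == 0)%:R.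
Proof.
rewrite -cfdot_irr cfdotE mulrA mulfV ?neq0CG // mul1r.
by apply: eq_bigr => g Gg; rewrite irr0 cfun1E Gg conjC1 mulr1.
Qed.

Lemma sum_Re_chi (gT : finGroupType) (G : {group gT}) (i : Iirr G) :
  \sum_(g in G) 'Re ('chi[G]_i g) = #|G|%:R * (i == 0)%:R.
Proof.
rewrite -raddf_sum sum_chi; apply/Creal_ReP.
by rewrite ger0_real // -natrM ler0n.
Qed.

Lemma chi0_1 (gT : finGroupType) (G : {group gT}) : 'chi[G]_0 1%g = 1.
Proof. by rewrite irr0 cfun1E group1. Qed.

Lemma sum_lin (gT : finGroupType) (G : {group gT}) (c : Iirr G -> algC) :
  \sum_(g in G) \sum_i c i * 'Re ('chi[G]_i g) = c 0 * #|G|%:R.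
Proof.
rewrite exchange_big /=.
rewrite (eq_bigr (fun i => c i * (#|G|%:R * (i == 0)%:R))); last first.
  by move=> i _; rewrite -mulr_sumr sum_Re_chi.
rewrite (bigD1 0) //= big1 ?addr0 ?eqxx ?mulr1 // => i /negPf ->.
by rewrite mulr0 mulr0.
Qed.

Lemma frob_ge0 (gT : finGroupType) (G : {group gT}) (g : gT) :
  g \in G -> 0 <= \sum_i ('chi[G]_i 1%g)^-1 * 'Re ('chi[G]_i g).
Proof.
move=> Gg.
pose S x := \sum_i 'chi[G]_i x * 'chi[G]_i x^-1%g * ('chi[G]_i g)^* / 'chi[G]_i 1%g.
have S_ge0 x : x \in G -> 0 <= S x.
  move=> Gx.
  have Gxi : x^-1%g \in G by rewrite groupV.
  pose j1 := enum_rank_in (classes1 G) (x ^: G)%g.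
  pose j2 := enum_rank_in (classes1 G) (x^-1 ^: G)%g.
  pose k := enum_rank_in (classes1 G) (g ^: G)%g.
  have E1 : enum_val j1 = (x ^: G)%g by rewrite enum_rankK_in // mem_classes.
  have E2 : enum_val j2 = (x^-1 ^: G)%g by rewrite enum_rankK_in // mem_classes.
  have E3 : enum_val k = (g ^: G)%g by rewrite enum_rankK_in // mem_classes.
  have K1 : x \in enum_val j1 by rewrite E1 class_refl.
  have K2 : x^-1%g \in enum_val j2 by rewrite E2 class_refl.
  have K3 : g \in enum_val k by rewrite E3 class_refl.
  have := gring_classM_coef_sum_eq K1 K2 K3 => /= H.
  have pos : 0 < (#|enum_val j1| * #|enum_val j2|)%:R / #|G|%:R :> algC.
    rewrite divr_gt0 ?ltr0n ?cardG_gt0 // muln_gt0.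
    by apply/andP; split; apply/card_gt0P; [exists x | exists x^-1%g].
  by rewrite -(pmulr_rge0 _ pos) -H ler0n.
have sumS : \sum_(x in G) S x =
    #|G|%:R * \sum_i ('chi[G]_i g)^* / 'chi[G]_i 1%g.
  rewrite /S exchange_big /= mulr_sumr; apply: eq_bigr => i _.
  rewrite -!mulr_suml.
  have -> : \sum_(x in G) 'chi[G]_i x * 'chi[G]_i x^-1%g = #|G|%:R.
    have := cfdot_irr i i; rewrite eqxx cfdotE => /(congr1 (fun z => #|G|%:R * z)).
    rewrite mulrA mulfV ?neq0CG // mul1r mulr1 => <-.
    by apply: eq_bigr => x _; rewrite irr_inv.
  by rewrite mulrA.
have T_ge0 : 0 <= \sum_i ('chi[G]_i g)^* / 'chi[G]_i 1%g.
  have : 0 <= \sum_(x in G) S x by apply: sumr_ge0 => x; apply: S_ge0.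
  by rewrite sumS pmulr_rge0 ?ltr0n ?cardG_gt0.
have := T_ge0; move/ger0_real/Creal_ReP => ReT.
suff -> : \sum_i ('chi[G]_i 1%g)^-1 * 'Re ('chi[G]_i g) =
   'Re (\sum_i ('chi[G]_i g)^* / 'chi[G]_i 1%g) by rewrite ReT.
rewrite raddf_sum /=; apply: eq_bigr => i _.
rewrite mulrC ReMr ?Re_conj //.
by apply: ger0_real; rewrite invr_ge0 ltW ?irr1_gt0.
Qed.

Lemma real_chi1 (gT : finGroupType) (G : {group gT}) (i : Iirr G) :
  'Re ('chi[G]_i 1%g) = 'chi[G]_i 1%g.
Proof. by apply/Creal_ReP/ger0_real/ltW/irr1_gt0. Qed.

Lemma wf_sum (gT : finGroupType) (G : {group gT}) (alpha : Iirr G -> algC) :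
  \sum_(g in G) weighted_fun G alpha g = alpha 0 * #|G|%:R.
Proof.
rewrite /weighted_fun (sum_lin _ _ (fun i => alpha i / cdim G i ^+ 2)).
by rewrite /cdim chi0_1 expr1n divr1.
Qed.

Lemma wf_real (gT : finGroupType) (G : {group gT}) (alpha : Iirr G -> algC) g :
  (forall i, 0 <= alpha i) -> weighted_fun G alpha g \is Num.real.
Proof.
move=> ha; rewrite /weighted_fun rpred_sum // => i _.
rewrite rpredM ?Creal_Re // rpredM //; first exact: ger0_real.
by apply: ger0_real; rewrite invr_ge0 exprn_ge0 // ltW ?irr1_gt0.
Qed.

Theorem corollary2 (gT : finGroupType) (G : {group gT}) :
  feasible G (cdim G) /\
  (forall alpha : Iirr G -> algC, feasible G alpha ->
     objective G (cdim G) <= objective G alpha).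
Proof.
have ge0n i : 0 <= cdim G i by apply/ltW/irr1_gt0.
split.
  split => //.
  - by rewrite -irr_sum_square; apply: eq_bigr => i _; rewrite expr2.
  - move=> g Gg.
    have -> : \sum_i cdim G i * 'Re ('chi[G]_i g) = 'Re (cfReg G g).
      rewrite cfReg_sum sum_cfunE raddf_sum; apply: eq_bigr => i _.
      rewrite cfunE /cdim -ReMl //; last exact/ger0_real/ltW/irr1_gt0.
    have h : 0 <= cfReg G g by rewrite cfRegE mulrn_wge0.
    by move/ger0_real/Creal_ReP: (h) => ->.
move=> alpha [Hsum Hge0 HF].
have objn : objective G (cdim G) = #|G|%:R.
  transitivity (\sum_(g in G) weighted_fun G (cdim G) g); last first.
    by rewrite wf_sum /cdim chi0_1 mul1r.
  rewrite /objective /L1norm.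
  apply: eq_bigr => g Gg.
  move/Creal_ReP: (wf_real _ _ _ g ge0n) => ->.
  apply: ger0_norm; rewrite /weighted_fun.
  rewrite (eq_bigr (fun i => ('chi[G]_i 1%g)^-1 * 'Re ('chi[G]_i g))).
    exact: frob_ge0.
  by move=> i _; rewrite /cdim expr2 invfM mulrA mulfV ?mul1r // irr1_neq0.
have a0 : #|G|%:R <= alpha 0 * #|G|%:R.
  rewrite -(sum_lin _ _ alpha) (bigD1 1%g) ?group1 //=.
  have -> : \sum_i alpha i * 'Re ('chi[G]_i 1%g) = #|G|%:R.
    by rewrite -Hsum; apply: eq_bigr => i _; rewrite real_chi1.
  rewrite lerDl sumr_ge0 // => g /andP[Gg _]; exact: HF.
rewrite objn (le_trans a0) // -wf_sum /objective /L1norm.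
apply: ler_sum => g _.
move/Creal_ReP: (wf_real _ _ _ g Hge0) => ->.
exact/real_ler_norm/wf_real.
Qed.
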